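(* (i) For each $m\in\{1,\dots,M\}$ and every measurable $q:\mathbb R^{p-\#\mathcal X(m)}\to\mathbb R$ with $\mathbb E|q(\boldsymbol X_{-\mathcal X(m)})|<\infty$, almost surely $$|\mathbb E q(\boldsymbol X_{-\mathcal X(m)})-\mathbb E(q(\boldsymbol X_{-\mathcal X(m)})\mid\boldsymbol X_{\mathcal X(m)})|\le\frac{\delta_0\,\mathbb E|q(\boldsymbol X_{-\mathcal X(m)})|}{\min_{1\le m'\le M,\ l\in\mathcal X(m'),\ a\in\{0,1\}}\mathbb P(X_l=a)}.$$ (ii) For all distinct $l,k\in\{1,\dots,M\}$ and every measurable $q:\mathbb R^{p-\#\mathcal X(l)}\to\mathbb R$, almost surely $$|\mathbb E(q(\boldsymbol X_{-\mathcal X(l)})\mid\boldsymbol X_{\mathcal X(k)},\boldsymbol X_{\mathcal X(l)})-\mathbb E(q(\boldsymbol X_{-\mathcal X(l)})\mid\boldsymbol X_{\mathcal X(k)})|\le\frac{2\delta_0\,\mathbb E|q(\boldsymbol X_{-\mathcal X(l)})|}{p_{\min}}.$$ (iii) For all distinct $l,k\in\{1,\dots,M\}$ and every measurable $q:\mathbb R^{p-\#\mathcal X(\{l,k\})}\to\mathbb R$, almost surely $$|\mathbb E(q(\boldsymbol X_{-\mathcal X(\{k,l\})})\mid\boldsymbol X_{\mathcal X(k)},\boldsymbol X_{\mathcal X(l)})-\mathbb E q(\boldsymbol X_{-\mathcal X(\{k,l\})})|\le\frac{3\delta_0\,\mathbb E|q(\boldsymbol X_{-\mathcal X(\{k,l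\})})|}{p_{\min}}.$$
   Context: Setup. $\boldsymbol X=(X_1,\dots,X_p)^\top$ is a random vector in $\{0,1\}^p$; $\{1,\dots,p\}$ is partitioned into disjoint nonempty feature groups $\mathcal X(1),\dots,\mathcal X(M)$; a group is either a single feature or has $\#\mathcal X(m)>1$ and consists of one-hot indicators ($\sum_{j\in\mathcal X(m)}\mathbf 1\{X_j=1\}=1$ a.s.). $\mathcal X(J)=\bigcup_{m\in J}\mathcal X(m)$; $\boldsymbol X_H=(X_j)_{j\in H}$, $\boldsymbol X_{-H}=(X_j)_{j\notin H}$. Conditional expectations/probabilities given null events are set to $0$. $p_{\min}=\min_{1\le l<k\le M,\,i\in\mathcal X(l),\,j\in\mathcal X(k),\,(a,b)\in\{0,1\}^2}\mathbb P(X_i=a,X_j=b)>0$; $\delta_0=\max_{1\le m\le M}\inf\{\delta\ge0:\mathbb P(\max_{i\in\mathcal X(m)}|\mathbb P(X_i=1\mid\boldsymbol X_{-\mathcal X(m)})-\mathbb P(X_i=1)|\le\delta)=1\}$. *)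

(* Defs.v *)
From HB Require Import structures.
From mathcomp Require Import all_boot all_order all_algebra.
From mathcomp Require Import classical_sets reals.
Set Implicit Arguments. Unset Strict Implicit. Unset Printing Implicit Defensive.
Import Order.TTheory GRing.Theory Num.Theory.
Local Open Scope ring_scope.

(* Outcomes of X = (X_1,...,X_p) in {0,1}^p, features indexed by 'I_p. *)
Notation state p := {ffun 'I_p -> bool}.

Section Defs.
Variables (R : realType) (p M : nat).
Implicit Types (P : {ffun state p -> R}) (H : {set 'I_p}) (x y : state p).

Definition is_pmf P := (forall x, 0 <= P x) /\ \sum_x P x = 1.

Definition prob P (A : pred (state p)) : R := \sum_(x | A x) P x.

Definition expect P (f : state p -> R) : R := \sum_x P x * f x.

Definition agree H x y : bool := [forall j in H, x j == y j].

(* E(f(X) | X_H) evaluated at the outcome x; 0 on null conditioning events *)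
Definition cond_exp P (f : state p -> R) H x : R :=
  let den := \sum_(y | agree H x y) P y in
  if den == 0 then 0 else (\sum_(y | agree H x y) P y * f y) / den.

(* X_{-H}: the coordinates outside H (coordinates in H are blanked to 0) *)
Definition dropX H x : state p := [ffun j => if j \in H then false else x j].

Definition fgroup (g : 'I_p -> 'I_M) (m : 'I_M) : {set 'I_p} := [set j | g j == m].

Definition delta0 (g : 'I_p -> 'I_M) P : R :=
  \big[Num.max/0]_(m : 'I_M)
    inf [set d : R | 0 <= d /\
      prob P [pred x : state p | \big[Num.max/0]_(i | g i == m)
                 `|cond_exp P (fun y => (y i)%:R) (~: fgroup g m) x
                   - prob P (fun y => y i)| <= d] = 1].

(* p_min = min over features i, j in distinct groups and a, b of
   P(X_i = a, X_j = b)  (the empty minimum, M <= 1, is taken as 1) *)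
Definition pmin (g : 'I_p -> 'I_M) P : R :=
  \big[Num.min/1]_(i : 'I_p) \big[Num.min/1]_(j | g i != g j)
    \big[Num.min/1]_(a : bool) \big[Num.min/1]_(b : bool)
      prob P [pred x : state p | (x i == a) && (x j == b)].

Definition marg_min P : R :=
  \big[Num.min/1]_(l : 'I_p) \big[Num.min/1]_(a : bool) prob P [pred x : state p | x l == a].

(* standing assumptions on the groups: nonempty, and each group is a single
   feature or a block of one-hot indicators (exactly one equals 1 a.s.) *)
Definition groups_ok (g : 'I_p -> 'I_M) P :=
  forall m : 'I_M, (exists j, g j = m) /\
    (#|fgroup g m| = 1%N \/
     prob P [pred x : state p | #|[set j in fgroup g m | x j]| == 1%N] = 1).

End Defs.

(* Main.v *)
Require Import Defs.
From HB Require Import structures.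
From mathcomp Require Import all_boot all_order all_algebra.
From mathcomp Require Import classical_sets reals.
From mathcomp Require Import ring lra.
Import Order.TTheory GRing.Theory Num.Theory.
Local Open Scope ring_scope.
Set Implicit Arguments. Unset Strict Implicit.

Section Helpers.
Variables (R : realType) (p : nat) (P : {ffun state p -> R}).
Hypothesis pmf : is_pmf P.
Implicit Types (H K L : {set 'I_p}) (x y z : state p).

Lemma P_ge0 y : 0 <= P y. Proof. by case: pmf. Qed.

Lemma agree_refl H x : agree H x x.
Proof. by apply/forall_inP => j _. Qed.

Lemma agree_sym H x y : agree H x y = agree H y x.
Proof.
by apply/forall_inP/forall_inP => A j /A; rewrite eq_sym.
Qed.

Lemma agree_trans H x y z : agree H x y -> agree H y z -> agree H x z.
Proof.
move=> /forall_inP A /forall_inP B; apply/forall_inP => j jH.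
by rewrite (eqP (A j jH)) (eqP (B j jH)).
Qed.

Lemma agree_sub H H' x y : H \subset H' -> agree H' x y -> agree H x y.
Proof.
move=> /fintype.subsetP S /forall_inP A; apply/forall_inP => j jH; exact: A (S j jH).
Qed.

Lemma agreeU K L x y : agree (K :|: L) x y = agree K x y && agree L x y.
Proof.
apply/idP/andP.
  move=> A; split; apply: agree_sub A; [exact: finset.subsetUl | exact: finset.subsetUr].
case=> /forall_inP A /forall_inP B; apply/forall_inP => j.
by rewrite finset.in_setU => /orP[/A|/B].
Qed.

Lemma P_le_den H x : P x <= \sum_(y | agree H x y) P y.
Proof.
rewrite (bigD1 x) ?agree_refl //= lerDl; apply: sumr_ge0 => y _; exact: P_ge0.
Qed.

Lemma den0 H x : \sum_(y | agree H x y) P y = 0 -> P x = 0.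
Proof.
move=> D; apply/eqP; rewrite eq_le P_ge0 andbT -D; exact: P_le_den.
Qed.

Lemma sum_ind (A : pred (state p)) (F : state p -> R) :
  \sum_(y | A y) F y = \sum_y F y * (A y)%:R.
Proof.
rewrite big_mkcond; apply: eq_bigr => y _; case: (A y); by rewrite ?mulr1 ?mulr0.
Qed.

Lemma den_eq H x y : agree H x y ->
  \sum_(z | agree H x z) P z = \sum_(z | agree H y z) P z.
Proof.
move=> Axy; apply: eq_bigl => z; apply/idP/idP => A.
  by apply: agree_trans A; rewrite agree_sym.
exact: agree_trans A.
Qed.

Lemma tower K (f h : state p -> R) :
  (forall y y', agree K y y' -> h y = h y') ->
  \sum_y P y * h y * cond_exp P f K y = \sum_y P y * h y * f y.
Proof.
move=> hK.
pose den y := \sum_(z | agree K y z) P z.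
have E1 : forall y, P y * h y * cond_exp P f K y =
   \sum_z (if agree K y z then h y * P y * (P z * f z) / den y else 0).
  move=> y; rewrite /cond_exp /=; rewrite -big_mkcond /=.
  case: eqP => D.
    rewrite (den0 D) !(mul0r, mulr0) big1 // => z _; by rewrite !(mul0r, mulr0).
  rewrite mulr_suml mulr_sumr; apply: eq_bigr => z _.
  by rewrite [P y * h y]mulrC mulrA.
rewrite (eq_bigr _ (fun y _ => E1 y)) exchange_big /=.
apply: eq_bigr => z _.
transitivity (\sum_y (if agree K z y then h z * (P z * f z) / den z * P y else 0)).
  apply: eq_bigr => y _; rewrite agree_sym; case: ifP => // A.
  rewrite (hK y z); last by rewrite agree_sym.
  rewrite /den (den_eq A).
  by rewrite (mulrAC (h z)) (mulrAC _ (P y)).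
rewrite -big_mkcond /= -mulr_sumr.
have [D|D] := eqVneq (den z) 0.
  by rewrite (den0 D) !(mul0r, mulr0).
by rewrite divfK // mulrCA mulrA.
Qed.


Lemma Pnpos y : ~~ (0 < P y) -> P y = 0.
Proof. by rewrite -leNgt => H; apply/eqP; rewrite eq_le H P_ge0. Qed.

Lemma prob_ind (A : pred (state p)) : prob P A = \sum_y P y * (A y)%:R.
Proof. exact: sum_ind. Qed.

Lemma as_cond_exp (f f' : state p -> R) K x :
  (forall y, 0 < P y -> f y = f' y) -> cond_exp P f K x = cond_exp P f' K x.
Proof.
move=> E; rewrite /cond_exp /=; congr (if _ then _ else _ / _).
apply: eq_bigr => y _; case: (ltrP 0 (P y)) => Py; first by rewrite E.
by rewrite (Pnpos (y:=y)) ?mul0r // -leNgt.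
Qed.

Lemma as_prob (A B : pred (state p)) :
  (forall y, 0 < P y -> A y = B y) -> prob P A = prob P B.
Proof.
move=> E; rewrite !prob_ind; apply: eq_bigr => y _.
case: (ltrP 0 (P y)) => Py; first by rewrite E.
by rewrite (Pnpos (y:=y)) ?mul0r // -leNgt.
Qed.

Lemma prob_one (A : pred (state p)) : (forall x, 0 < P x -> A x) -> prob P A = 1.
Proof.
move=> H; case: pmf => _ <-; rewrite /prob [RHS](bigID A) /= [X in _ + X]big1 ?addr0 // => y Ay.
by apply: Pnpos; apply/negP => /H; rewrite (negbTE Ay).
Qed.

Lemma prob_oneP (A : pred (state p)) x : prob P A = 1 -> 0 < P x -> A x.
Proof.
move=> H Px; apply/negPn/negP => nA.
have : \sum_y P y > 1.
  rewrite (bigID A) /= -/(prob P A) H ltrDl (bigD1 x) //=.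
  by apply: ltr_pwDl => //; apply: sumr_ge0 => y _; exact: P_ge0.
by case: pmf => _ ->; rewrite ltxx.
Qed.

Lemma prob_le (A B : pred (state p)) : (forall y, A y -> B y) -> prob P A <= prob P B.
Proof.
move=> AB; rewrite !prob_ind; apply: ler_sum => y _; apply: ler_wpM2l; first exact: P_ge0.
by case: (A y) (AB y) => [->|] //; case: (B y).
Qed.

Lemma prob_ge0 (A : pred (state p)) : 0 <= prob P A.
Proof. by apply: sumr_ge0 => y _; exact: P_ge0. Qed.

Lemma cond_exp_def (f : state p -> R) K x : 0 < P x ->
  cond_exp P f K x = (\sum_y P y * f y * (agree K x y)%:R) / prob P (agree K x).
Proof.
move=> Px; rewrite /cond_exp /= -sum_ind.
have : 0 < \sum_(y | agree K x y) P y by apply: lt_le_trans Px (P_le_den K x).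
by rewrite lt0r => /andP[/negbTE -> _].
Qed.

Lemma prob_agree_gt0 K x : 0 < P x -> 0 < prob P (agree K x).
Proof. by move=> Px; apply: lt_le_trans Px (P_le_den K x). Qed.

End Helpers.
Section Gen.
Variables (R : realType) (p : nat) (P : {ffun state p -> R}).
Hypothesis pmf : is_pmf P.
Implicit Types (H K L : {set 'I_p}) (x y z : state p).

Lemma gen_i H (Q : state p -> R) x (d : R) :
  (forall y y', agree (~: H) y y' -> Q y = Q y') -> 0 < P x ->
  (forall y, 0 < P y -> `|cond_exp P (fun z => (agree H x z)%:R) (~: H) y
                          - prob P (agree H x)| <= d) ->
  `|expect P Q - cond_exp P Q H x| <= d * expect P (fun y => `|Q y|) / prob P (agree H x).
Proof.
move=> dep Px dev.
set pi := prob P (agree H x).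
have pipos : 0 < pi by exact: (prob_agree_gt0 pmf _ Px).
set c := fun y => cond_exp P (fun z => (agree H x z)%:R) (~: H) y.
have key : expect P Q - cond_exp P Q H x = (\sum_y P y * Q y * (pi - c y)) / pi.
  rewrite cond_exp_def // -/pi.
  rewrite -(@tower _ _ P pmf (~: H) (fun z => (agree H x z)%:R) Q dep).
  rewrite [X in _ = X / pi](eq_bigr (fun y => P y * Q y * pi - P y * Q y * c y)); last first.
    by move=> y _; rewrite mulrBr.
  rewrite sumrB -mulr_suml mulrBl mulfK //; exact: lt0r_neq0.
rewrite key normrM normfV (gtr0_norm pipos) ler_pM2r ?invr_gt0 //.
rewrite /expect mulr_sumr; apply: le_trans (ler_norm_sum _ _ _) _.
apply: ler_sum => y _; rewrite !normrM (ger0_norm (P_ge0 pmf y)).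
case: (ltrP 0 (P y)) => Py.
  have := dev y Py; rewrite distrC -/c => h.
  rewrite mulrC; apply: ler_wpM2r => //.
  by apply: mulr_ge0; [exact: P_ge0 | exact: normr_ge0].
by rewrite (Pnpos pmf (y:=y)) ?(mul0r, mulr0) // -leNgt.
Qed.


Lemma gen_ii K L (Q : state p -> R) x (d : R) :
  (forall y y', agree (~: L) y y' -> Q y = Q y') -> K \subset ~: L -> 0 < P x ->
  (forall y, 0 < P y -> `|cond_exp P (fun z => (agree L x z)%:R) (~: L) y
                          - prob P (agree L x)| <= d) ->
  `|cond_exp P Q (K :|: L) x - cond_exp P Q K x|
     <= 2 * d * expect P (fun y => `|Q y|) / prob P (agree (K :|: L) x).
Proof.
move=> dep KL Px dev.
have d0 : 0 <= d := le_trans (normr_ge0 _) (dev x Px).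
set pi := prob P (agree L x).
set c := fun y => cond_exp P (fun z => (agree L x z)%:R) (~: L) y.
set e := fun y => c y - pi.
have hKdep : forall y y', agree (~: L) y y' -> agree K x y = agree K x y'.
  move=> y y' Ay; have Ay' := agree_sub KL Ay.
  apply/idP/idP => B; first exact: agree_trans B Ay'.
  by apply: agree_trans B _; rewrite agree_sym.
set A := prob P (agree (K :|: L) x).
set Pk := prob P (agree K x).
set EQ := expect P (fun y => `|Q y|).
have Apos : 0 < A by exact: (prob_agree_gt0 pmf _ Px).
have PkA : A <= Pk by apply: (prob_le pmf) => y; rewrite agreeU => /andP[].
have Pkpos : 0 < Pk := lt_le_trans Apos PkA.
set S := \sum_y P y * Q y * (agree K x y)%:R.
set E1 := \sum_y P y * (Q y * (agree K x y)%:R) * e y.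
set E2 := \sum_y P y * (agree K x y)%:R * e y.
have hN : \sum_y P y * Q y * (agree (K :|: L) x y)%:R = pi * S + E1.
  transitivity (\sum_y P y * (Q y * (agree K x y)%:R) * (agree L x y)%:R).
    apply: eq_bigr => y _; rewrite agreeU; case: (agree K x y) => /=;
    by rewrite ?(mulr1, mulr0, mul0r).
  rewrite -(@tower _ _ P pmf (~: L) (fun z => (agree L x z)%:R)
              (fun y => Q y * (agree K x y)%:R)); last first.
    by move=> y y' Ay; rewrite (dep _ _ Ay) (hKdep _ _ Ay).
  rewrite /E1 /S mulr_sumr -big_split; apply: eq_bigr => y _; rewrite /e /c /=; ring.
have hA : A = pi * Pk + E2.
  rewrite /A prob_ind.
  transitivity (\sum_y P y * (agree K x y)%:R * (agree L x y)%:R).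
    apply: eq_bigr => y _; rewrite agreeU; case: (agree K x y) => /=;
    by rewrite ?(mulr1, mulr0, mul0r).
  rewrite -(@tower _ _ P pmf (~: L) (fun z => (agree L x z)%:R)
              (fun y => (agree K x y)%:R)); last first.
    by move=> y y' Ay; rewrite (hKdep _ _ Ay).
  rewrite /E2 /Pk prob_ind mulr_sumr -big_split; apply: eq_bigr => y _; rewrite /e /c /=; ring.
rewrite !cond_exp_def // -/A -/Pk -/S hN.
have A0 : A != 0 by exact: lt0r_neq0.
have Pk0 : Pk != 0 by exact: lt0r_neq0.
have -> : (pi * S + E1) / A - S / Pk = (Pk * E1 - S * E2) / (A * Pk).
  rewrite [in RHS](_ : Pk * E1 - S * E2 = (pi * S + E1) * Pk - S * A); last first.
    by rewrite hA; ring.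
  by field; rewrite A0 Pk0.
rewrite normrM normfV (gtr0_norm (mulr_gt0 Apos Pkpos)).
have -> : 2 * d * EQ / A = (2 * d * EQ * Pk) / (A * Pk) by field; rewrite A0 Pk0.
rewrite ler_pM2r ?invr_gt0 ?mulr_gt0 //.
have b1 : `|E1| <= d * EQ.
  rewrite /E1; apply: le_trans (ler_norm_sum _ _ _) _; rewrite /EQ /expect mulr_sumr.
  apply: ler_sum => y _; rewrite !normrM (ger0_norm (P_ge0 pmf y)).
  case: (ltrP 0 (P y)) => Py; last by rewrite (Pnpos pmf (y:=y)) ?(mul0r, mulr0) // -leNgt.
  have hy : `|e y| <= d by exact: dev.
  case: (agree K x y) => /=; rewrite ?normr1 ?normr0 ?(mulr1, mulr0, mul0r).
    rewrite mulrC; apply: ler_wpM2r => //.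
    by apply: mulr_ge0; [exact: P_ge0 | exact: normr_ge0].
  by apply: mulr_ge0 => //; apply: mulr_ge0; [exact: P_ge0 | exact: normr_ge0].
have b2 : `|E2| <= d * Pk.
  rewrite /E2; apply: le_trans (ler_norm_sum _ _ _) _; rewrite /Pk prob_ind mulr_sumr.
  apply: ler_sum => y _; rewrite !normrM (ger0_norm (P_ge0 pmf y)).
  case: (ltrP 0 (P y)) => Py; last by rewrite (Pnpos pmf (y:=y)) ?(mul0r, mulr0) // -leNgt.
  have hy : `|e y| <= d by exact: dev.
  case: (agree K x y) => /=; rewrite ?normr1 ?normr0 ?(mulr1, mulr0, mul0r) //.
  rewrite mulrC; apply: ler_wpM2r => //; exact: P_ge0.
have b3 : `|S| <= EQ.
  rewrite /S; apply: le_trans (ler_norm_sum _ _ _) _; rewrite /EQ /expect.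
  apply: ler_sum => y _; rewrite !normrM (ger0_norm (P_ge0 pmf y)).
  case: (agree K x y) => /=; rewrite ?normr1 ?normr0 ?(mulr1, mulr0, mul0r) //.
  by apply: mulr_ge0; [exact: P_ge0 | exact: normr_ge0].
apply: le_trans (ler_normB _ _) _.
rewrite !normrM (gtr0_norm Pkpos).
apply: le_trans (lerD (ler_wpM2l (ltW Pkpos) b1)
                      (ler_pM (normr_ge0 _) (normr_ge0 _) b3 b2)) _.
rewrite (_ : Pk * (d * EQ) + EQ * (d * Pk) = 2 * d * EQ * Pk) //; ring.
Qed.

End Gen.
Section Big.
Variable R : realType.

Lemma le_bigmax_seq (I : eqType) (s : seq I) (Pr : pred I) (F : I -> R) z i0 :
  i0 \in s -> Pr i0 -> F i0 <= \big[Num.max/z]_(i <- s | Pr i) F i.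
Proof.
elim: s => //= a s IH; rewrite inE big_cons => /orP[/eqP <- | H] Pi0.
  by rewrite Pi0 le_max lexx.
by case: (Pr a); rewrite ?le_max (IH H Pi0) ?orbT.
Qed.

Lemma le_bigmax (T : finType) (Pr : pred T) (F : T -> R) z i0 :
  Pr i0 -> F i0 <= \big[Num.max/z]_(i | Pr i) F i.
Proof. exact: le_bigmax_seq (mem_index_enum i0). Qed.

Lemma le_bigmin_seq (I : eqType) (s : seq I) (Pr : pred I) (F : I -> R) z i0 :
  i0 \in s -> Pr i0 -> \big[Num.min/z]_(i <- s | Pr i) F i <= F i0.
Proof.
elim: s => //= a s IH; rewrite inE big_cons => /orP[/eqP <- | H] Pi0.
  by rewrite Pi0 ge_min lexx.
by case: (Pr a); rewrite ?ge_min (IH H Pi0) ?orbT.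
Qed.

Lemma le_bigmin (T : finType) (Pr : pred T) (F : T -> R) z i0 :
  Pr i0 -> \big[Num.min/z]_(i | Pr i) F i <= F i0.
Proof. exact: le_bigmin_seq (mem_index_enum i0). Qed.

Lemma bigmin_ge (T : finType) (Pr : pred T) (F : T -> R) z c :
  c <= z -> (forall i, Pr i -> c <= F i) -> c <= \big[Num.min/z]_(i | Pr i) F i.
Proof.
move=> cz H; apply: (big_ind (fun v => c <= v)) => // u v cu cv.
by rewrite le_min cu cv.
Qed.

Lemma bigmin_le1 (T : finType) (Pr : pred T) (F : T -> R) :
  \big[Num.min/1]_(i | Pr i) F i <= 1.
Proof.
elim: (index_enum T) => [|a s IH]; first by rewrite big_nil.
by rewrite big_cons; case: (Pr a); rewrite ?ge_min IH ?orbT.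
Qed.

Lemma bigmax_ge0 (T : finType) (Pr : pred T) (F : T -> R) :
  (forall i, Pr i -> 0 <= F i) -> 0 <= \big[Num.max/0]_(i | Pr i) F i.
Proof.
move=> H; apply: (big_ind (fun v => 0 <= v)) => // u v cu cv.
by rewrite le_max cu.
Qed.

End Big.

Section Main.
Variables (R : realType) (p M : nat) (g : 'I_p -> 'I_M) (P : {ffun state p -> R}).
Hypothesis pmf : is_pmf P.
Implicit Types (H K L : {set 'I_p}) (x y z : state p).

Lemma in_fgroup j m : (j \in fgroup g m) = (g j == m).
Proof. by rewrite /fgroup finset.in_set. Qed.

Lemma rep m x : groups_ok g P -> 0 < P x ->
  exists i a, g i = m /\ forall y, 0 < P y -> agree (fgroup g m) x y = (y i == a).
Proof.
case/(_ m) => [[j0 _] [/eqP/cards1P [i Gi] | oh]] Px.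
  exists i, (x i); split.
    have : i \in fgroup g m by rewrite Gi finset.set11.
    by rewrite in_fgroup => /eqP.
  move=> y _; rewrite Gi; apply/forall_inP/eqP => [A | E j].
    by rewrite (eqP (A i (finset.set11 i))).
  by rewrite finset.in_set1 => /eqP ->; rewrite E.
have := prob_oneP pmf oh Px => /= /cards1P [i Hi].
have : i \in [set j in fgroup g m | x j] by rewrite Hi finset.set11.
rewrite finset.in_set => /andP[iG xi].
have hx : forall j, j \in fgroup g m -> x j = (j == i).
  move=> j jG; have : (j \in [set j in fgroup g m | x j]) = (j \in [set i]) by rewrite Hi.
  by rewrite /= finset.in_set finset.in_set1 jG.
exists i, true; split; first by move: iG; rewrite in_fgroup => /eqP.
move=> y Py; have := prob_oneP pmf oh Py => /= /cards1P [i' Hi'].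
have hy : forall j, j \in fgroup g m -> y j = (j == i').
  move=> j jG; have : (j \in [set j in fgroup g m | y j]) = (j \in [set i']) by rewrite Hi'.
  by rewrite /= finset.in_set finset.in_set1 jG.
apply/idP/idP.
  by move=> /forall_inP A; have := A i iG; rewrite xi => /eqP <-.
move=> /eqP yi.
have ii' : i = i' by apply/eqP; rewrite -hy.
apply/forall_inP => j jG; by rewrite hx // hy // ii'.
Qed.

Lemma delta0_ge0 : 0 <= delta0 g P.
Proof.
apply: bigmax_ge0 => m _.
apply: lb_le_inf.
  exists (\sum_x \big[Num.max/0]_(i | g i == m)
            `|cond_exp P (fun y => (y i)%:R) (~: fgroup g m) x - prob P (fun y => y i)|).
  split; first by apply: sumr_ge0 => x _; apply: bigmax_ge0 => i _.
  apply: (prob_one pmf) => x _ /=.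
  rewrite (bigD1 x) //= lerDl; apply: sumr_ge0 => y _; apply: bigmax_ge0 => i _.
  done.
move=> d [d0 _]; exact: d0.
Qed.


Lemma cond_exp_compl (f : state p -> R) K y : 0 < P y ->
  cond_exp P (fun z => 1 - f z) K y = 1 - cond_exp P f K y.
Proof.
move=> Py; rewrite !cond_exp_def //.
have pipos := prob_agree_gt0 pmf K Py.
rewrite (eq_bigr (fun z => P z * (agree K y z)%:R - P z * f z * (agree K y z)%:R));
  last by move=> z _; rewrite /=; ring.
rewrite sumrB -prob_ind; field; exact: lt0r_neq0.
Qed.

Lemma prob_compl (A : pred (state p)) : prob P (fun z => ~~ A z) = 1 - prob P A.
Proof.
case: pmf => _ H1; rewrite -H1 /prob [\sum_x P x](bigID A) /=; lra.
Qed.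

Lemma dev_i m i y : g i = m -> 0 < P y ->
  `|cond_exp P (fun z => (z i)%:R) (~: fgroup g m) y - prob P (fun z => z i)| <= delta0 g P.
Proof.
move=> gi Py.
apply: (le_trans (y := \big[Num.max/0]_(i0 | g i0 == m)
   `|cond_exp P (fun z => (z i0)%:R) (~: fgroup g m) y - prob P (fun z => z i0)|)).
  by apply: (@le_bigmax _ _ _ _ _ i); rewrite /= gi.
rewrite /delta0; apply: le_trans _ (@le_bigmax _ _ (fun _ => true) _ _ m isT).
apply: lb_le_inf.
  exists (\sum_x \big[Num.max/0]_(i | g i == m)
            `|cond_exp P (fun y => (y i)%:R) (~: fgroup g m) x - prob P (fun y => y i)|).
  split; first by apply: sumr_ge0 => x _; apply: bigmax_ge0 => i0 _.
  apply: (prob_one pmf) => x _ /=.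
  rewrite (bigD1 x) //= lerDl; apply: sumr_ge0 => z _; apply: bigmax_ge0 => i0 _.
  done.
move=> d [_ hd]; exact: (prob_oneP pmf hd Py).
Qed.

Lemma dev_bound m x i a : g i = m ->
  (forall y, 0 < P y -> agree (fgroup g m) x y = (y i == a)) ->
  forall y, 0 < P y ->
  `|cond_exp P (fun z => (agree (fgroup g m) x z)%:R) (~: fgroup g m) y
     - prob P (agree (fgroup g m) x)| <= delta0 g P.
Proof.
move=> gi hr y Py.
rewrite (as_cond_exp pmf (f' := fun z => (z i == a)%:R)); last by move=> z Pz; rewrite hr.
rewrite (as_prob pmf (B := fun z => z i == a)); last exact: hr.
case: a {hr}.
  rewrite (as_cond_exp pmf (f' := fun z => (z i)%:R)); last by move=> z _; rewrite eqb_id.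
  rewrite (as_prob pmf (B := fun z => z i)); last by move=> z _; rewrite eqb_id.
  exact: dev_i.
rewrite (as_cond_exp pmf (f' := fun z => 1 - (z i)%:R)); last by move=> z _; case: (z i); rewrite /= ?subrr ?subr0.
rewrite (as_prob pmf (B := fun z => ~~ z i)); last by move=> z _; case: (z i).
rewrite cond_exp_compl // prob_compl.
rewrite (_ : forall u v : R, 1 - u - (1 - v) = - (u - v)); last by move=> u v; ring.
rewrite normrN; exact: dev_i.
Qed.


Lemma pmin_le i j a b : g i != g j ->
  pmin g P <= prob P [pred x : state p | (x i == a) && (x j == b)].
Proof.
move=> gij; rewrite /pmin.
apply: le_trans (@le_bigmin _ _ (fun _ => true) _ _ i isT) _ => /=.
apply: le_trans (@le_bigmin _ _ (fun j => g i != g j) _ _ j gij) _ => /=.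
apply: le_trans (@le_bigmin _ _ (fun _ => true) _ _ a isT) _ => /=.
exact: (@le_bigmin _ _ (fun _ => true) _ _ b isT).
Qed.

Lemma margmin_le i a : marg_min P <= prob P [pred x : state p | x i == a].
Proof.
rewrite /marg_min.
apply: le_trans (@le_bigmin _ _ (fun _ => true) _ _ i isT) _ => /=.
exact: (@le_bigmin _ _ (fun _ => true) _ _ a isT).
Qed.

Lemma expect_abs_ge0 (Q : state p -> R) : 0 <= expect P (fun y => `|Q y|).
Proof. by apply: sumr_ge0 => y _; apply: mulr_ge0; [exact: P_ge0 | exact: normr_ge0]. Qed.

End Main.

Lemma dropX_eq p (H H2 : {set 'I_p}) (y y' : state p) : H \subset H2 -> agree (~: H) y y' ->
  dropX H2 y = dropX H2 y'.
Proof.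
move=> /fintype.subsetP S /forall_inP A; apply/ffunP => j; rewrite !ffunE.
case: ifP => // jH2; apply/eqP; apply: A; rewrite finset.in_setC; apply/negP => /S.
by rewrite jH2.
Qed.

Unset Implicit Arguments. Set Strict Implicit.

Theorem lemma6 (R : realType) (p M : nat) (g : 'I_p -> 'I_M)
  (P : {ffun state p -> R}) :
  is_pmf P -> groups_ok g P -> 0 < pmin g P ->
  [/\
   (* (i) *)
   forall (m : 'I_M) (q : state p -> R),
     let Q := fun y => q (dropX (fgroup g m) y) in
     prob P [pred x : state p | `|expect P Q - cond_exp P Q (fgroup g m) x|
                      <= delta0 g P * expect P (fun y => `|Q y|) / marg_min P] = 1,
   (* (ii) *)
   forall (l k : 'I_M), l != k -> forall (q : state p -> R),
     let Q := fun y => q (dropX (fgroup g l) y) in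
     prob P [pred x : state p | `|cond_exp P Q (fgroup g k :|: fgroup g l) x
                        - cond_exp P Q (fgroup g k) x|
                      <= 2 * delta0 g P * expect P (fun y => `|Q y|) / pmin g P] = 1
   &
   (* (iii) *)
   forall (l k : 'I_M), l != k -> forall (q : state p -> R),
     let Q := fun y => q (dropX (fgroup g k :|: fgroup g l) y) in
     prob P [pred x : state p | `|cond_exp P Q (fgroup g k :|: fgroup g l) x - expect P Q|
                      <= 3 * delta0 g P * expect P (fun y => `|Q y|) / pmin g P] = 1].
Proof.
move=> pmf gok pminpos.
have d0 := delta0_ge0 g pmf.
split.
- move=> m q Q; apply: (prob_one pmf) => x Px /=.
  have [i [a [gi hr]]] := rep pmf m gok Px.
  have dep : forall y y', agree (~: fgroup g m) y y' -> Q y = Q y'.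
    by move=> y y' A; rewrite /Q (dropX_eq (fintype.subxx _) A).
  have hd := gen_i pmf dep Px (dev_bound pmf gi hr).
  case: (pickP (fun j => g j != m)) => [j gj | none].
    have mmpos : 0 < marg_min P.
      apply: lt_le_trans pminpos _; rewrite /marg_min.
      apply: bigmin_ge; first exact: bigmin_le1.
      move=> l _; apply: bigmin_ge; first exact: bigmin_le1.
      move=> b _; case: (eqVneq (g l) (g j)) => glj.
        have [j' gj'] := (gok m).1.
        apply: le_trans (@pmin_le _ _ _ g P l j' b true _) _.
          by rewrite glj gj'.
        by apply: (prob_le pmf) => y /andP[].
      apply: le_trans (@pmin_le _ _ _ g P l j b true glj) _.
      by apply: (prob_le pmf) => y /andP[].
    have pige : marg_min P <= prob P (agree (fgroup g m) x).
      rewrite (as_prob pmf (B := fun z => z i == a)) //; exact: margmin_le.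
    have pipos := lt_le_trans mmpos pige.
    apply: le_trans hd _.
    by rewrite ler_wpM2l ?mulr_ge0 ?expect_abs_ge0 // lef_pV2 ?posrE.
  have Qc : forall y, Q y = Q x.
    move=> y; apply: dep; apply/forall_inP => j.
    by rewrite finset.in_setC in_fgroup; move: (none j) => /= ->.
  have -> : expect P Q = Q x.
    rewrite /expect (eq_bigr (fun y => P y * Q x)); last by move=> y _; rewrite Qc.
    by rewrite -mulr_suml; case: pmf => _ ->; rewrite mul1r.
  have -> : cond_exp P Q (fgroup g m) x = Q x.
    rewrite cond_exp_def // (eq_bigr (fun y => P y * (agree (fgroup g m) x y)%:R * Q x));
      last by move=> y _; rewrite Qc mulrAC.
    rewrite -mulr_suml -prob_ind mulrAC divff ?mul1r //.
    exact: lt0r_neq0 (prob_agree_gt0 pmf _ Px).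
  rewrite subrr normr0; apply: divr_ge0; first by rewrite mulr_ge0 ?expect_abs_ge0.
  rewrite /marg_min; apply: bigmin_ge => // l _; apply: bigmin_ge => // b _.
  exact: prob_ge0.
- move=> l k lk q Q; apply: (prob_one pmf) => x Px /=.
  have [i [a [gi hri]]] := rep pmf k gok Px.
  have [j [b [gj hrj]]] := rep pmf l gok Px.
  have KL : fgroup g k \subset ~: fgroup g l.
    apply/fintype.subsetP => t; rewrite finset.in_setC !in_fgroup => /eqP ->.
    by rewrite eq_sym.
  have dep : forall y y', agree (~: fgroup g l) y y' -> Q y = Q y'.
    by move=> y y' A; rewrite /Q (dropX_eq (fintype.subxx _) A).
  have hd := gen_ii pmf dep KL Px (dev_bound pmf gj hrj).
  have Age : pmin g P <= prob P (agree (fgroup g k :|: fgroup g l) x).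
    rewrite (as_prob pmf (B := fun z => (z i == a) && (z j == b))).
      by apply: pmin_le; rewrite gi gj eq_sym.
    by move=> y Py; rewrite agreeU hri // hrj.
  apply: le_trans hd _.
  by rewrite ler_wpM2l ?mulr_ge0 ?expect_abs_ge0 // lef_pV2 ?posrE // (lt_le_trans pminpos Age).
- move=> l k lk q Q; apply: (prob_one pmf) => x Px /=.
  have [i [a [gi hri]]] := rep pmf k gok Px.
  have [j [b [gj hrj]]] := rep pmf l gok Px.
  have KL : fgroup g k \subset ~: fgroup g l.
    apply/fintype.subsetP => t; rewrite finset.in_setC !in_fgroup => /eqP ->.
    by rewrite eq_sym.
  have depL : forall y y', agree (~: fgroup g l) y y' -> Q y = Q y'.
    by move=> y y' A; rewrite /Q (dropX_eq (finset.subsetUr _ _) A).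
  have depK : forall y y', agree (~: fgroup g k) y y' -> Q y = Q y'.
    by move=> y y' A; rewrite /Q (dropX_eq (finset.subsetUl _ _) A).
  have h2 := gen_ii pmf depL KL Px (dev_bound pmf gj hrj).
  have h1 := gen_i pmf depK Px (dev_bound pmf gi hri).
  have Age : pmin g P <= prob P (agree (fgroup g k :|: fgroup g l) x).
    rewrite (as_prob pmf (B := fun z => (z i == a) && (z j == b))).
      by apply: pmin_le; rewrite gi gj eq_sym.
    by move=> y Py; rewrite agreeU hri // hrj.
  have PkA : prob P (agree (fgroup g k :|: fgroup g l) x) <= prob P (agree (fgroup g k) x).
    by apply: (prob_le pmf) => y; rewrite agreeU => /andP[].
  have Apos := lt_le_trans pminpos Age.
  have Pkpos := lt_le_trans Apos PkA.
  apply: le_trans (ler_distD (cond_exp P Q (fgroup g k) x) _ _) _.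
  rewrite [`|cond_exp P Q (fgroup g k) x - _|]distrC.
  apply: le_trans (lerD h2 h1) _.
  set E := expect P _; set d := delta0 g P.
  have E0 : 0 <= E by exact: expect_abs_ge0.
  apply: le_trans (lerD (_ : _ <= 2 * d * E / pmin g P) (_ : _ <= d * E / pmin g P)) _.
  + by rewrite ler_wpM2l ?mulr_ge0 // lef_pV2 ?posrE.
  + by rewrite ler_wpM2l ?mulr_ge0 // lef_pV2 ?posrE // (le_trans Age PkA).
  + rewrite (_ : 2 * d * E / pmin g P + d * E / pmin g P = 3 * d * E / pmin g P) //.
    ring.
Qed.
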